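(* In the setting described in the context, let $G\in R_w$ and $H\in R_z$ ($w,z\in\mathbb{Z}^{n-1}_{\ge0}$) be coprime polynomials. If $G$ is not divisible by any monomial (of positive degree), then for every $i\in M$ one has $G\,R_{z+i}+H\,R_{w+i}=R_{w+z+i}$.
   Context: Let $\mathbb{K}$ be a field. A Newton polyhedron is the convex hull of $S+\mathbb{R}^n_{\ge0}$ for a nonempty finite $S\subset\mathbb{Z}^n_{\ge0}$; for $\xi\in\mathbb{R}^n_{\ge0}$ the face $\Delta^\xi=\{a\in\Delta:\langle\xi,a\rangle=\min_{b\in\Delta}\langle\xi,b\rangle\}$ is compact iff $\xi\in\mathbb{R}^n_{>0}$; a loose edge is a compact 1-dimensional face not contained in any compact face of dimension $\ge2$. Let $\Delta$ be a Newton polyhedron with a loose edge $E$, let $c\in\mathbb{Z}^n$ be a primitive lattice vector parallel to $E$, and let $\xi_1,\dots,\xi_{n-1}\in\mathbb{Z}^n_{\ge0}$ be linearly independent vectors with $\langle\xi_i,c\rangle=0$. For $\alpha\in\mathbb{Z}^n$ put $\omega(\underline x^\alpha)=(\langle\xi_1,\alpha\rangle,\dots,\langle\xi_{n-1},\alpha\rangle)$. For $w\in\mathbb{Z}^{n-1}_{\ge0}$ let $R_w\subset\mathbb{K}[x_1,\dots,x_n]$ be the $\mathbb{K}$-span of monomials $\underline x^\alpha$, $\alpha\in\mathbb{Z}^n_{\ge0}$, with $\omega(\underline x^\alpha)=w$. Let $M$ be the set of $z\in\mathbb{Z}^{n-1}_{\ge0}$ for which there is $\alpha\in\mathbb{Z}^n$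 with $\omega(\underline x^\alpha)=z$ and $\langle\xi,\alpha\rangle\ge0$ for all $\xi\in\mathbb{R}^n_{\ge0}$ orthogonal to $E$. *)

(* Defs.v *)
From HB Require Import structures.
From mathcomp Require Import all_boot all_order all_algebra.
From mathcomp Require Import reals.
From mathcomp Require Import mpoly.
Set Implicit Arguments. Unset Strict Implicit. Unset Printing Implicit Defensive.
Import Order.TTheory GRing.Theory Num.Theory.
Local Open Scope ring_scope.

Section Geometry.
Variables (R : realType) (n : nat).

Definition dotR (x y : 'I_n -> R) : R := \sum_(k < n) x k * y k.

Definition convex_hull (A : ('I_n -> R) -> Prop) (a : 'I_n -> R) : Prop :=
  exists (m : nat) (lam : 'I_m -> R) (p : 'I_m -> 'I_n -> R),
    [/\ (forall j, 0 <= lam j), \sum_(j < m) lam j = 1,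
        (forall j, A (p j)) & (forall k, a k = \sum_(j < m) lam j * p j k)].

Definition shifted_orthant (S : seq {ffun 'I_n -> nat}) (a : 'I_n -> R) : Prop :=
  exists2 s, s \in S & forall k, (s k)%:R <= a k.

Definition newton_polyhedron (S : seq {ffun 'I_n -> nat}) :=
  convex_hull (shifted_orthant S).

Definition face (D : ('I_n -> R) -> Prop) (xi : 'I_n -> R) (a : 'I_n -> R) : Prop :=
  D a /\ forall b, D b -> dotR xi a <= dotR xi b.

Definition is_face (D F : ('I_n -> R) -> Prop) : Prop :=
  exists xi : 'I_n -> R, (forall k, 0 <= xi k) /\ forall a, F a <-> face D xi a.

Definition bounded (F : ('I_n -> R) -> Prop) : Prop :=
  exists B : R, forall a, F a -> forall k, `|a k| <= B.

Definition aff_indep3 (a b c : 'I_n -> R) : Prop :=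
  forall s t : R, (forall k, s * (b k - a k) + t * (c k - a k) = 0) -> s = 0 /\ t = 0.

Definition dim_ge2 (F : ('I_n -> R) -> Prop) : Prop :=
  exists a b c, [/\ F a, F b, F c & aff_indep3 a b c].

Definition dim_ge1 (F : ('I_n -> R) -> Prop) : Prop :=
  exists a b, [/\ F a, F b & a <> b].

Definition loose_edge (D E : ('I_n -> R) -> Prop) : Prop :=
  [/\ is_face D E, bounded E, dim_ge1 E, ~ dim_ge2 E &
      forall F, is_face D F -> bounded F -> (forall a, E a -> F a) -> ~ dim_ge2 F].

Definition parallel (E : ('I_n -> R) -> Prop) (c : 'I_n -> int) : Prop :=
  forall a b, E a -> E b -> exists t : R, forall k, b k - a k = t * (c k)%:~R.

Definition orth_to (E : ('I_n -> R) -> Prop) (xi : 'I_n -> R) : Prop :=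
  forall a b, E a -> E b -> dotR xi (fun k => a k - b k) = 0.

Definition inM (E : ('I_n -> R) -> Prop) (xis : 'I_n.-1 -> 'I_n -> nat)
    (z : 'I_n.-1 -> nat) : Prop :=
  exists alpha : 'I_n -> int,
    (forall i, \sum_(k < n) (xis i k)%:Z * alpha k = (z i)%:Z) /\
    (forall xi : 'I_n -> R, (forall k, 0 <= xi k) -> orth_to E xi ->
       0 <= \sum_(k < n) xi k * (alpha k)%:~R).

Definition lin_indep (xis : 'I_n.-1 -> 'I_n -> nat) : Prop :=
  forall lam : 'I_n.-1 -> R,
    (forall k, \sum_(i < n.-1) lam i * (xis i k)%:R = 0) -> forall i, lam i = 0.

End Geometry.

Definition primitive (n : nat) (c : 'I_n -> int) : Prop :=
  forall d : int, (forall k, (d %| c k)%Z) -> `|d| = 1.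

Section Polys.
Variables (K : fieldType) (n : nat).

Definition omega (xis : 'I_n.-1 -> 'I_n -> nat) (m : 'X_{1..n}) : 'I_n.-1 -> nat :=
  fun i => (\sum_(k < n) xis i k * m k)%N.

(* p belongs to R_w, the K-span of monomials x^m with omega(x^m) = w *)
Definition in_Rw (xis : 'I_n.-1 -> 'I_n -> nat) (w : 'I_n.-1 -> nat)
    (p : {mpoly K[n]}) : Prop :=
  forall m, m \in msupp p -> forall i, omega xis m i = w i.

Definition mdivides (d p : {mpoly K[n]}) : Prop := exists q, p = d * q.

Definition mcoprime (G H : {mpoly K[n]}) : Prop :=
  forall d, mdivides d G -> mdivides d H -> exists e, d * e = 1.

Definition no_monomial_factor (G : {mpoly K[n]}) : Prop :=
  forall m : 'X_{1..n}, (0 < mdeg m)%N -> ~ mdivides 'X_[m] G.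

End Polys.

(* Main.v *)
Require Import Defs.
From HB Require Import structures.
From mathcomp Require Import all_boot all_order all_algebra.
From mathcomp Require Import reals.
From mathcomp Require Import mpoly.
From mathcomp Require Import zify ring lra.
Set Implicit Arguments. Unset Strict Implicit. Unset Printing Implicit Defensive.
Import Order.TTheory GRing.Theory Num.Theory.
Local Open Scope ring_scope.

Section PhiSec.
Variables (K : fieldType) (n : nat) (c : 'I_n -> int).

Definition cp : 'X_{1..n} := [multinom (if (0 <= c i)%R then `|c i|%N else 0%N) | i < n].
Definition cm : 'X_{1..n} := [multinom (if (c i < 0)%R then `|c i|%N else 0%N) | i < n].

Lemma cpmE i : (cp i)%:Z - (cm i)%:Z = c i.
Proof.
rewrite /cp /cm !mnmE; case: (lerP 0 (c i)) => h.
  by rewrite subr0 gez0_abs.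
by rewrite sub0r ltz0_abs // opprK.
Qed.

Definition Phi (N : nat) (f : {poly K}) : {mpoly K[n]} :=
  \sum_(j < N.+1) f`_j *: 'X_[(cp *+ j + cm *+ (N - j))%MM].

Lemma PhiD N : {morph Phi N : x y / x + y >-> x + y}.
Proof.
move=> x y; rewrite /Phi -big_split /=; apply: eq_bigr => j _.
by rewrite coefD scalerDl.
Qed.

Lemma Phi0 N : Phi N 0 = 0.
Proof. by rewrite /Phi big1 // => j _; rewrite coef0 scale0r. Qed.

Lemma PhiZ N a f : Phi N (a *: f) = a *: Phi N f.
Proof.
rewrite /Phi scaler_sumr; apply: eq_bigr => j _.
by rewrite coefZ scalerA.
Qed.

Lemma Phi_sum N (I : Type) (r : seq I) (P : pred I) (F : I -> {poly K}) :
  Phi N (\sum_(i <- r | P i) F i) = \sum_(i <- r | P i) Phi N (F i).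
Proof. exact: (big_morph (Phi N) (PhiD N) (Phi0 N)). Qed.

Lemma PhiX N j : (j <= N)%N -> Phi N 'X^j = 'X_[(cp *+ j + cm *+ (N - j))%MM].
Proof.
move=> jN; have jN' : (j < N.+1)%N by [].
rewrite /Phi (bigD1 (Ordinal jN')) //= coefXn eqxx scale1r big1 ?addr0 //.
move=> i ne; rewrite coefXn; case: eqP => [e|_]; last by rewrite scale0r.
by case/eqP: ne; apply: val_inj.
Qed.

Lemma poly_expand {f : {poly K}} {N} : (size f <= N)%N ->
  f = \sum_(i < N) f`_i *: 'X^i.
Proof.
move=> sf; rewrite -poly_def; apply/polyP => i; rewrite coef_poly.
by case: ltnP => // h; rewrite nth_default // (leq_trans sf h).
Qed.

Lemma Phi_mul N1 N2 (f1 f2 : {poly K}) : (size f1 <= N1.+1)%N -> (size f2 <= N2.+1)%N ->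
  Phi N1 f1 * Phi N2 f2 = Phi (N1 + N2) (f1 * f2).
Proof.
move=> s1 s2.
rewrite {2}(poly_expand s1) {2}(poly_expand s2) [in RHS]mulr_suml Phi_sum {1}/Phi mulr_suml.
apply: eq_bigr => i _; rewrite [in RHS]mulr_sumr Phi_sum {1}/Phi mulr_sumr; apply: eq_bigr => j _.
rewrite -scalerAl -scalerAr scalerA -scalerAl -scalerAr scalerA -exprD PhiZ PhiX; last first.
  by have := ltn_ord i; have := ltn_ord j; lia.
rewrite -mpolyXD; congr (_ *: 'X_[_]); apply/mnmP => k.
rewrite !mnmDE !mulmnE.
have := ltn_ord i; have := ltn_ord j; move: (cp k) (cm k) => a b hi hj.
rewrite ltnS in hi hj.
have -> : (N1 + N2 - (i + j) = (N1 - i) + (N2 - j))%N by lia.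
ring.
Qed.

Definition Mon (r : 'X_{1..n}) N j : 'X_{1..n} := (r + (cp *+ j + cm *+ (N - j)))%MM.

Lemma XPhiE r N f : 'X_[r] * Phi N f = \sum_(j < N.+1) f`_j *: 'X_[Mon r N j].
Proof.
rewrite /Phi mulr_sumr; apply: eq_bigr => j _.
by rewrite -scalerAr -mpolyXD.
Qed.

Hypothesis cnz : exists k, c k != 0.

Lemma Mon_inj r N j j' : (j <= N)%N -> (j' <= N)%N -> Mon r N j = Mon r N j' -> j = j'.
Proof.
move=> hj hj' /mnmP e; case: cnz => k ck; have := e k.
rewrite /Mon !mnmDE !mulmnE /cp /cm !mnmE.
have p : (0 < `|c k|)%N by rewrite absz_gt0.
move: (`|c k|%N) p => a p.
case: (lerP 0 (c k)) => h1.
  rewrite /= !mul0n !addn0 => /eqP; rewrite eqn_add2l eqn_mul2l eqn0Ngt p /=.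
  by move/eqP.
rewrite /= !mul0n !add0n => /eqP; rewrite eqn_add2l eqn_mul2l eqn0Ngt p /= => /eqP.
lia.
Qed.

Lemma mcoeff_XPhi r N f j : (j <= N)%N -> ('X_[r] * Phi N f)@_(Mon r N j) = f`_j.
Proof.
move=> jN; have jN' : (j < N.+1)%N by [].
rewrite XPhiE raddf_sum (bigD1 (Ordinal jN')) //= mcoeffZ mcoeffX eqxx mulr1 big1 ?addr0 //.
move=> i ne; rewrite mcoeffZ mcoeffX; case: eqP => [e|_]; last by rewrite mulr0.
case/eqP: ne; apply: val_inj => /=; apply: Mon_inj e => //; by rewrite -ltnS.
Qed.

Lemma msupp_XPhi r N f m : m \in msupp ('X_[r] * Phi N f) ->
  exists2 j, (j <= N)%N & m = Mon r N j.
Proof.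
rewrite mcoeff_msupp XPhiE raddf_sum => nz.
have [j _ /= hj] : exists2 j : 'I_N.+1, true & ('X_[Mon r N j] : {mpoly K[n]})@_m != 0.
  apply/exists_inP; move: nz; apply: contraR; rewrite negb_exists_in => /forall_inP h.
  by apply/eqP; apply: big1 => j _ /=; rewrite mcoeffZ (eqP (negbNE (h j isT))) mulr0.
exists j; first by rewrite -ltnS.
by move: hj; rewrite mcoeffX; case: (Mon r N j =P m) => [<-|] //; rewrite eqxx.
Qed.

Lemma mcoeff_XPhi_out r N f m : (forall j, (j <= N)%N -> m != Mon r N j) ->
  ('X_[r] * Phi N f)@_m = 0.
Proof.
move=> h; apply/eqP; rewrite mcoeff_eq0; apply/negP => /msupp_XPhi [j hj e].
by move: (h j hj); rewrite e eqxx.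
Qed.

End PhiSec.

Lemma Posz_sum (I : Type) (r : seq I) (P : pred I) (F : I -> nat) :
  Posz (\sum_(i <- r | P i) F i)%N = \sum_(i <- r | P i) (F i)%:Z.
Proof. exact: (big_morph Posz PoszD (erefl _)). Qed.

Lemma cnz_of_prim n (c : 'I_n -> int) : primitive c -> exists k, c k != 0.
Proof.
move=> pc; case: (boolP [exists k, c k != 0]) => [/existsP //|].
rewrite negb_exists => /forallP h; exfalso.
have H : forall k, (0 %| c k)%Z by move=> k; rewrite (eqP (negbNE (h k))) dvdz0.
by have := pc 0 H; rewrite normr0.
Qed.

Lemma int_line n (c : 'I_n -> int) (dl : 'I_n -> int) k0 :
  primitive c -> c k0 != 0 -> (forall j, dl j * c k0 = dl k0 * c j) ->
  exists t : int, forall j, dl j = t * c j.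
Proof.
move=> pc ck0 h.
set a := dl k0; set b := c k0.
set g := gcdz a b.
have gnz : g != 0 by rewrite gcdz_eq0 negb_and ck0 orbT.
have [u [v huv]] := Bezoutz a b.
set a' := (a %/ g)%Z; set b' := (b %/ g)%Z.
have ea : a = a' * g by rewrite divzK // dvdz_gcdl.
have eb : b = b' * g by rewrite divzK // dvdz_gcdr.
have e1 : u * a' + v * b' = 1.
  apply: (mulIf gnz); rewrite mul1r mulrDl -!mulrA -ea -eb; exact: huv.
have hj j : a' * c j = b' * dl j.
  apply: (mulIf gnz); have e := h j; rewrite -/a -/b ea eb in e.
  transitivity (a' * g * c j); first ring.
  rewrite -e; ring.
have db j : (b' %| c j)%Z.
  apply/dvdzP; exists (u * dl j + v * c j).
  transitivity ((u * a' + v * b') * c j); first by rewrite e1 mul1r.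
  rewrite mulrDl -mulrA hj; ring.
have b1 : `|b'| = 1 by apply: pc.
have bb : b' * b' = 1 by rewrite -expr2 -real_normK ?num_real // b1 expr1n.
exists (b' * a') => j; rewrite -mulrA hj mulrA bb mul1r //.
Qed.

Lemma real_line (R : realType) n (xis : 'I_n.-1 -> 'I_n -> nat) (c dl : 'I_n -> int) :
  lin_indep R xis -> (exists k, c k != 0) ->
  (forall i, \sum_(k < n) (xis i k)%:Z * c k = 0) ->
  (forall i, \sum_(k < n) (xis i k)%:Z * dl k = 0) ->
  exists t : R, forall j, (dl j)%:~R = t * (c j)%:~R.
Proof.
move=> li [k0 ck0] hc hd.
have n0 : (0 < n)%N by case: (k0) => k /=; lia.
pose X : 'M[R]_(n.-1, n) := \matrix_(i, k) (xis i k)%:R.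
have rX : \rank X = n.-1.
  apply/eqP; change (row_free X); rewrite -kermx_eq0; apply/eqP/row_matrixP => i; rewrite row0.
  set lam := row i (kermx X).
  have e : lam *m X = 0 by rewrite -row_mul mulmx_ker row0.
  suff H : forall j, lam 0 j = 0 by apply/rowP => j; rewrite H mxE.
  apply: (li (fun i => lam 0 i)) => k.
  have h := congr1 (fun M : 'rV[R]_n => M 0 k) e; rewrite /= !mxE in h.
  rewrite -[X in _ = X]h.
  by apply: eq_bigr => l _; congr (_ * _); rewrite /X mxE.
have rK : \rank (kermx X^T) = 1%N by rewrite mxrank_ker mxrank_tr rX; lia.
have toR (v : 'I_n -> int) : (forall i, \sum_(k < n) (xis i k)%:Z * v k = 0) ->
    ((\row_k (v k)%:~R : 'rV[R]_n) <= kermx X^T)%MS.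
  move=> hv; apply/sub_kermxP/rowP => i; rewrite !mxE.
  have h := congr1 (fun x : int => (x%:~R : R)) (hv i); rewrite rmorph_sum /= mulr0z in h.
  rewrite -[X in _ = X]h.
  apply: eq_bigr => k _; rewrite !mxE rmorphM /= mulrC; congr (_ * _).
have cK := toR _ hc; have dK := toR _ hd.
have cnz : (\row_k (c k)%:~R : 'rV[R]_n) != 0.
  apply/eqP => /rowP /(_ k0); rewrite !mxE => /eqP; rewrite intr_eq0.
  by apply/negP.
have eqK : (kermx X^T <= \row_k (c k)%:~R)%MS.
  case: (mxrank_leqif_eq cK) => _; rewrite rK rank_rV cnz eqxx => /esym/andP[].
  by [].
have [t ht] := sub_rVP (submx_trans dK eqK).
exists t => j; have := congr1 (fun M : 'rV[R]_n => M 0 j) ht; rewrite !mxE => ->.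
by [].
Qed.

Arguments cnz_of_prim {n c}.
Arguments int_line {n c dl k0}.
Arguments real_line {R n xis c dl}.

Lemma ker_line (R : realType) n (xis : 'I_n.-1 -> 'I_n -> nat) (c : 'I_n -> int) :
  lin_indep R xis -> primitive c ->
  (forall i, \sum_(k < n) (xis i k)%:Z * c k = 0) ->
  forall m1 m2 : 'X_{1..n}, (forall i, omega xis m1 i = omega xis m2 i) ->
  exists t : int, forall j, (m2 j)%:Z = (m1 j)%:Z + t * c j.
Proof.
move=> li pc hc m1 m2 hm.
have [k0 ck0] := cnz_of_prim pc.
pose dl j := (m2 j)%:Z - (m1 j)%:Z.
have hd : forall i, \sum_(k < n) (xis i k)%:Z * dl k = 0.
  move=> i; have := congr1 Posz (hm i); rewrite /omega !Posz_sum => e.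
  under eq_bigr do rewrite /dl mulrBr.
  by rewrite sumrB; apply/eqP; rewrite subr_eq0; apply/eqP; rewrite -e.
have [t ht] := real_line li (ex_intro _ k0 ck0) hc hd.
have hl j : dl j * c k0 = dl k0 * c j.
  apply: (@intr_inj R); rewrite !rmorphM /= !ht; ring.
have [s hs] := int_line pc ck0 hl.
by exists s => j; rewrite -hs /dl addrC subrK.
Qed.


Lemma seq_argmin (T : eqType) (s : seq T) (f : T -> int) : s != [::] ->
  exists2 x, x \in s & forall y, y \in s -> f x <= f y.
Proof.
elim: s => // a s IH _; case: (eqVneq s [::]) => [->|ne].
  by exists a => [|y]; rewrite ?mem_seq1 ?inE // => /eqP ->.
have [x xs hx] := IH ne.
case: (lerP (f a) (f x)) => h.
  exists a; first by rewrite inE eqxx.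
  move=> y; rewrite inE => /orP[/eqP -> //|/hx]; exact: le_trans.
exists x; first by rewrite inE xs orbT.
move=> y; rewrite inE => /orP[/eqP ->|/hx //]; exact: ltW.
Qed.

Section Omega.
Variables (n : nat) (xis : 'I_n.-1 -> 'I_n -> nat).

Lemma omD m1 m2 i : omega xis (m1 + m2)%MM i = (omega xis m1 i + omega xis m2 i)%N.
Proof. by rewrite /omega -big_split; apply: eq_bigr => k _; rewrite mnmDE mulnDr. Qed.

Lemma omMn m j i : omega xis (m *+ j)%MM i = (omega xis m i * j)%N.
Proof. by rewrite /omega big_distrl; apply: eq_bigr => k _; rewrite mulmnE mulnA. Qed.

Lemma om0 i : omega xis 0%MM i = 0%N.
Proof. by rewrite /omega big1 // => k _; rewrite mnm0E muln0. Qed.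

End Omega.

Section Struct.
Variables (K : fieldType) (n : nat) (c : 'I_n -> int) (xis : 'I_n.-1 -> 'I_n -> nat).
Hypothesis ker : forall m1 m2 : 'X_{1..n}, (forall i, omega xis m1 i = omega xis m2 i) ->
  exists t : int, forall j, (m2 j)%:Z = (m1 j)%:Z + t * c j.
Hypothesis cnz : exists k, c k != 0.
Hypothesis omc : forall i, omega xis (cp c) i = omega xis (cm c) i.

Lemma om_Mon r N j i : (j <= N)%N ->
  omega xis (Mon c r N j) i = (omega xis r i + omega xis (cm c) i * N)%N.
Proof.
move=> jN; rewrite /Mon !omD !omMn omc -mulnDr; congr (_ + _ * _)%N; lia.
Qed.

Lemma MonZ r N j k : (j <= N)%N ->
  (Mon c r N j k)%:Z = (r k)%:Z + (cm c k * N)%:Z + j%:Z * c k.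
Proof.
move=> jN; rewrite /Mon !mnmDE !mulmnE -cpmE.
have -> : (N = j + (N - j))%N by lia.
rewrite addKn !PoszD !PoszM; ring.
Qed.

Definition ell (m : 'X_{1..n}) : int := \sum_(k < n) c k * (m k)%:Z.

Lemma ell_shift (m1 m2 : 'X_{1..n}) (t : int) :
  (forall j, (m2 j)%:Z = (m1 j)%:Z + t * c j) ->
  ell m2 = ell m1 + t * \sum_(k < n) c k * c k.
Proof.
move=> h; rewrite /ell mulr_sumr -big_split; apply: eq_bigr => k _ /=.
by rewrite h; ring.
Qed.

Lemma sumsq_gt0 : 0 < \sum_(k < n) c k * c k.
Proof.
case: cnz => k0 ck0; rewrite (bigD1 k0) //=.
apply: (@lt_le_trans _ _ (c k0 * c k0)).
  by rewrite -expr2 exprn_even_gt0 //=.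
rewrite lerDl; apply: sumr_ge0 => k _; rewrite -expr2; exact: sqr_ge0.
Qed.

Lemma mstructure y (F : {mpoly K[n]}) : in_Rw xis y F -> F != 0 ->
  exists r N (f : {poly K}), [/\ size f = N.+1, f`_0 != 0,
    F = 'X_[r] * Phi c N f & forall i, (omega xis r i + omega xis (cm c) i * N)%N = y i].
Proof.
move=> hF Fnz.
have sne : msupp F != [::] by apply: contra Fnz => /eqP /msuppnil0 ->.
have [mlo lo_in hlo] := seq_argmin ell sne.
have [mhi hi_in hhi] := seq_argmin (fun m => - ell m) sne.
set S := \sum_(k < n) c k * c k.
have Sp : 0 < S by exact: sumsq_gt0.
have pos (m : 'X_{1..n}) : m \in msupp F -> exists t : nat,
    (forall j, (m j)%:Z = (mlo j)%:Z + t%:Z * c j) /\ ell m = ell mlo + t%:Z * S.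
  move=> mi; have [t ht] := ker (m1 := mlo) (m2 := m) (fun i => etrans (hF _ lo_in i) (esym (hF _ mi i))).
  have el := ell_shift ht; have := hlo _ mi; rewrite el lerDl => tS.
  have t0 : 0 <= t by rewrite -(pmulr_lge0 _ Sp).
  by exists `|t|%N; rewrite gez0_abs.
have [N [hN eN]] := pos _ hi_in.
pose r := (mlo - cm c *+ N)%MM.
have hle k : (cm c k * N <= mlo k)%N.
  have := hN k; rewrite /cm mnmE; case: ltrP => ck; last by rewrite mul0n.
  move=> e; nia.
have hMon j k : (j <= N)%N -> (Mon c r N j k)%:Z = (mlo k)%:Z + j%:Z * c k.
  move=> jN; rewrite MonZ // /r mnmBE mulmnE -PoszD subnK //; exact: hle.
have eqM (m : 'X_{1..n}) j : (j <= N)%N -> (forall k, (m k)%:Z = (mlo k)%:Z + j%:Z * c k) ->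
    m = Mon c r N j.
  by move=> jN h; apply/mnmP => k; apply/eqP; rewrite -eqz_nat h hMon.
have e0 : Mon c r N 0 = mlo by apply/esym/eqM => // k; rewrite mul0r addr0.
have eNN : Mon c r N N = mhi by apply/esym/eqM.
pose f : {poly K} := \poly_(j < N.+1) F@_(Mon c r N j).
have f0 : f`_0 != 0 by rewrite coef_poly /= e0 -mcoeff_msupp.
exists r, N, f; split => //.
- by apply: size_poly_eq; rewrite eNN -mcoeff_msupp.
- apply/mpolyP => m.
  case: (boolP [exists j : 'I_N.+1, m == Mon c r N j]) => [/existsP [j /eqP ->]|].
    by rewrite mcoeff_XPhi ?coef_poly ?ltn_ord // -ltnS.
  rewrite negb_exists => /forallP hm.
  rewrite mcoeff_XPhi_out //; last first.
    move=> j jN; have jN' : (j < N.+1)%N by [].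
    exact: (hm (Ordinal jN')).
  apply/eqP; rewrite mcoeff_eq0; apply/negP => mi.
  have [t [ht et]] := pos _ mi.
  have tN : (t <= N)%N.
    have := hhi _ mi; rewrite lerN2 et eN lerD2l ler_pM2r // lez_nat //.
  have tN' : (t < N.+1)%N by [].
  by move: (hm (Ordinal tN')); rewrite /= (eqM _ _ tN ht) eqxx.
- by move=> i; rewrite -(hF _ lo_in i) -e0 om_Mon.
Qed.
End Struct.


Section Coprime.
Variables (K : fieldType) (n : nat) (c : 'I_n -> int).
Hypothesis cnz : exists k, c k != 0.

Lemma Phi_dvd D N (q f : {poly K}) : size q = D.+1 -> q %| f -> (size f <= N.+1)%N ->
  f != 0 -> exists f', (D <= N)%N /\ Phi c N f = Phi c D q * Phi c (N - D) f'.
Proof.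
move=> sq qf sf fnz; exists (f %/ q).
have qnz : q != 0 by rewrite -size_poly_eq0 sq.
have ef := divpK qf.
have f'nz : f %/ q != 0 by apply: contra fnz => /eqP e; rewrite -ef e mul0r.
have sz := size_mul f'nz qnz; rewrite ef sq in sz.
have DN : (D <= N)%N.
  have hs : (0 < size (f %/ q)%R)%N by rewrite size_poly_gt0.
  rewrite sz in sf; move: sf hs; set z := size _; lia.
have sf' : (size (f %/ q)%R <= (N - D).+1)%N.
  rewrite sz in sf; move: sf; set z := size _; lia.
split => //; rewrite Phi_mul ?sq //.
by rewrite subnKC // mulrC ef.
Qed.

Lemma coprime_transfer d e (g h : {poly K}) (eta : 'X_{1..n}) :
  size g = d.+1 -> g`_0 != 0 -> (size h <= e.+1)%N ->
  mcoprime (Phi c d g) ('X_[eta] * Phi c e h) -> coprimep g h.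
Proof.
move=> sg g0 sh hc; apply/negPn/negP => nc.
set q := gcdp g h.
have gnz : g != 0 by rewrite -size_poly_eq0 sg.
have qnz : q != 0 by rewrite gcdp_eq0 negb_and gnz.
set D := (size q).-1.
have sq : size q = D.+1 by rewrite /D prednK // size_poly_gt0.
have D0 : (0 < D)%N.
  move: nc; rewrite /coprimep -/q sq; case: (D) => //.
have [g' [Dd eg]] := Phi_dvd sq (dvdp_gcdl g h) (eq_leq sg) gnz.
have dH : mdivides (Phi c D q) ('X_[eta] * Phi c e h).
  case: (eqVneq h 0) => [->|hnz].
    by exists 0; rewrite Phi0 !mulr0.
  have [h' [De eh]] := Phi_dvd sq (dvdp_gcdr g h) sh hnz.
  by exists ('X_[eta] * Phi c (e - D) h'); rewrite eh mulrCA.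
have [u hu] := hc _ (ex_intro _ _ eg) dH.
have /andP[/eqP ec _] := @mpoly_intro_unit n K (Phi c D q) u (etrans (mulrC _ _) hu).
have q0 : q`_0 != 0.
  have := divpK (dvdp_gcdl g h); rewrite -/q => eg'.
  by move: g0; rewrite -eg' coef0M; apply: contra => /eqP ->; rewrite mulr0.
have qD : q`_D != 0.
  have := lead_coef_eq0 q; rewrite lead_coefE sq /= => ->; exact: qnz.
have c1 : (Phi c D q)@_(Mon c 0 D D) = q`_D by rewrite -[Phi c D q]mul1r -mpolyX0 mcoeff_XPhi.
have c2 : (Phi c D q)@_(Mon c 0 D 0) = q`_0 by rewrite -[Phi c D q]mul1r -mpolyX0 mcoeff_XPhi.
rewrite ec mcoeffC in c1; rewrite ec mcoeffC in c2.
have m1 : Mon c 0 D D = 0%MM.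
  case: (eqVneq (Mon c 0 D D) 0%MM) => // H1.
  by move: qD; rewrite -c1 (negbTE H1) mulr0 eqxx.
have m2 : Mon c 0 D 0 = 0%MM.
  case: (eqVneq (Mon c 0 D 0) 0%MM) => // H1.
  by move: q0; rewrite -c2 (negbTE H1) mulr0 eqxx.
have := Mon_inj cnz (leqnn D) (leq0n D) (etrans m1 (esym m2)).
by move=> E; rewrite E in D0.
Qed.
End Coprime.


Lemma alg_core (K : fieldType) d e (g h : {poly K}) Kx s N :
  (0 < d)%N -> size g = d.+1 -> g`_0 != 0 -> (size h <= e.+1)%N -> coprimep g h ->
  (Kx <= N)%N -> (s + (d.-1 + e) <= N)%N ->
  exists A B : {poly K}, [/\ (size B <= d)%N, 'X^Kx = g * A + 'X^s * h * B &
     A = 0 \/ ((d <= N)%N /\ (size A <= (N - d).+1)%N)].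
Proof.
move=> d0 sg g0 sh cgh KN sN.
have gnz : g != 0 by rewrite -size_poly_eq0 sg.
have cgX : coprimep g ('X^s * h).
  rewrite coprimepMr cgh andbT; apply: coprimep_expr.
  by rewrite coprimepX rootE horner_coef0.
have [[u v] /= huv] := Bezout_eq1_coprimepP _ _ cgX.
set B0 := 'X^Kx * v.
set B := B0 %% g; set Q := B0 %/ g.
have eB : B = B0 - Q * g by rewrite /B /Q {2}(divp_eq B0 g) addrC addKr.
set A := 'X^Kx * u + 'X^s * h * Q.
have eq : 'X^Kx = g * A + 'X^s * h * B.
  rewrite eB /A /B0; transitivity ('X^Kx * (u * g + v * ('X^s * h))); first by rewrite huv mulr1.
  ring.
exists A, B; split => //.
  by have := ltn_modp B0 g; rewrite gnz sg ltnS.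
case: (eqVneq A 0) => [->|Anz]; [by left | right].
have szgA : (size (g * A)%R <= N.+1)%N.
  have -> : g * A = 'X^Kx - 'X^s * h * B by rewrite eq addrK.
  apply: (leq_trans (size_polyD _ _)); rewrite size_polyN geq_max size_polyXn ltnS KN /=.
  apply: (leq_trans (size_polyMleq _ _)).
  have := size_polyMleq ('X^s) h; rewrite size_polyXn => h1.
  have h2 : (size B <= d)%N by have := ltn_modp B0 g; rewrite gnz sg ltnS.
  move: h1 h2 sh sN d0; set x := size ('X^s * h)%R; set y := size B; set z := size h; lia.
rewrite size_mul // sg in szgA.
have := size_poly_gt0 A; rewrite Anz => /idP hA.
move: szgA hA; set y := size A; lia.
Qed.

Lemma lift_decomp (K : fieldType) n (c : 'I_n -> int) d e (g h A B : {poly K}) Kx s N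
    (r eta beta : 'X_{1..n}) :
  (0 < d)%N -> size g = d.+1 -> (size h <= e.+1)%N -> (size B <= d)%N ->
  (Kx <= N)%N -> (s + (d.-1 + e) <= N)%N ->
  'X^Kx = g * A + 'X^s * h * B -> A = 0 \/ ((d <= N)%N /\ (size A <= (N - d).+1)%N) ->
  (eta + beta)%MM = Mon c r (N - (d.-1 + e)) s ->
  'X_[Mon c r N Kx] = Phi c d g * ('X_[r] * Phi c (N - d) A)
     + ('X_[eta] * Phi c e h) * ('X_[beta] * Phi c d.-1 B).
Proof.
move=> d0 sg sh sB KN sN eX hA em.
rewrite /Mon mpolyXD -PhiX // eX PhiD mulrDr; congr (_ + _).
  case: hA => [->|[dN sA]]; first by rewrite !(mulr0, Phi0).
  by rewrite mulrCA Phi_mul ?sg // (subnKC dN).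
set D0 := (d.-1 + e)%N.
have eN : N = ((N - D0) + D0)%N by rewrite subnK //; lia.
have shB : (size (h * B)%R <= D0.+1)%N.
  apply: (leq_trans (size_polyMleq _ _)); move: sh sB d0; rewrite /D0.
  set x := size h; set y := size B; lia.
have -> : 'X^s * h * B = 'X^s * (h * B) by rewrite mulrA.
rewrite {1}eN -Phi_mul ?size_polyXn //; last by lia.
have sB' : (size B <= d.-1.+1)%N by rewrite prednK.
rewrite /D0 addnC -Phi_mul // PhiX; last by lia.
rewrite mulrA -mpolyXD -/(Mon c r (N - (e + d.-1)) s) addnC -em mpolyXD; ring.
Qed.

Lemma cpm_case n (c : 'I_n -> int) j :
  ((cp c j)%:Z = c j /\ cm c j = 0%N) \/ (cp c j = 0%N /\ (cm c j)%:Z = - c j).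
Proof.
rewrite /cp /cm !mnmE; case: (lerP 0 (c j)) => h; [left|right].
  by rewrite gez0_abs.
by rewrite ltz0_abs.
Qed.

Lemma choose_frame n (c : 'I_n -> int) (gam eta beta : 'X_{1..n}) D0 (t : int) :
  (forall j, (gam j)%:Z = ((eta + beta + cm c *+ D0)%MM j)%:Z + t * c j) ->
  exists r N Kx s, [/\ (Kx <= N)%N, (s + D0 <= N)%N, gam = Mon c r N Kx
     & (eta + beta)%MM = Mon c r (N - D0) s].
Proof.
move=> ht.
have H j : (gam j)%:Z = (eta j + beta j + cm c j * D0)%N%:Z + t * c j /\
   (((cp c j)%:Z = c j /\ cm c j = 0%N) \/ (cp c j = 0%N /\ (cm c j)%:Z = - c j)).
  by split; [rewrite ht !mnmDE mulmnE | exact: cpm_case].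
case: (ltrP t 0) => t0.
  exists (gam - cm c *+ (D0 + `|t|))%MM, (D0 + `|t|)%N, 0%N, `|t|%N; split => //.
  - lia.
  - apply/mnmP => j; rewrite /Mon !mnmDE !mnmBE !mulmnE.
    have [e1 e2] := H j; move: e1 e2; rewrite muln0 add0n subn0.
    nia.
  - apply/mnmP => j; rewrite /Mon !mnmDE !mnmBE !mulmnE.
    have [e1 e2] := H j; move: e1 e2.
    nia.
exists (eta + beta + cm c *+ D0 - cm c *+ (maxn D0 `|t|))%MM, (maxn D0 `|t|), `|t|%N, 0%N; split; [lia|lia| |].
- apply/mnmP => j; rewrite /Mon !mnmDE !mnmBE !mulmnE !mnmDE !mulmnE.
  have [e1 e2] := H j; move: e1 e2.
  nia.
- apply/mnmP => j; rewrite /Mon !mnmDE !mnmBE !mulmnE !mnmDE !mulmnE.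
  have [e1 e2] := H j; move: e1 e2.
  nia.
Qed.


Lemma choose_k0 n (c alpha : 'I_n -> int) :
  (forall m, c m = 0 -> 0 <= alpha m) ->
  (forall p q, 0 < c p -> c q < 0 -> 0 <= - c q * alpha p + c p * alpha q) ->
  exists k0 : int, forall m, 0 <= alpha m + (cm c m)%:Z + k0 * c m.
Proof.
move=> F1 F2.
pose L : int := (\sum_(m < n) `|alpha m|%N).+1%:Z.
have bnd m : `|alpha m| < L.
  rewrite /L ltz_nat ltnS.
  by rewrite (bigD1 m) //= leq_addr.
have cmE m : (cm c m)%:Z = if c m < 0 then - c m else 0.
  by rewrite /cm mnmE; case: ltrP => h //; rewrite ltz0_abs.
have fin k0 : (forall m, 0 < c m -> 0 <= alpha m + k0 * c m) ->
    (forall q, c q < 0 -> (k0 - 1) * - c q <= alpha q) ->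
    forall m, 0 <= alpha m + (cm c m)%:Z + k0 * c m.
  move=> h1 h2 m; rewrite cmE; case: (ltrgtP (c m) 0) => cm0.
  - have := h2 _ cm0; lia.
  - by rewrite addr0; apply: h1.
  - by rewrite cm0 mulr0 !addr0; apply: F1.
case: (boolP [exists p, 0 < c p]) => [/existsP [p cp]|]; last first.
  rewrite negb_exists => /forallP hp; exists (- L); apply: fin.
    by move=> m cm0; move: (hp m); rewrite cm0.
  move=> q cq; have := bnd q; nia.
pose P j := [forall m, (0 < c m) ==> (0 <= alpha m + (j%:Z - L) * c m)].
have exP : exists j, P j.
  exists (`|L| + `|L|)%N; apply/forallP => m; apply/implyP => cm0.
  have := bnd m; have : 0 <= L by [].
  rewrite PoszD gez0_abs //. nia.
case: (ex_minnP exP) => j0 Pj0 minj.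
have j0p : (0 < j0)%N.
  case: j0 Pj0 minj => // /forallP /(_ p) /implyP /(_ cp) h _.
  have := bnd p; move: h; rewrite sub0r; nia.
have [p' [cp' hp']] : exists p', 0 < c p' /\ alpha p' + (j0%:Z - 1 - L) * c p' < 0.
  have : ~~ P j0.-1.
    by apply/negP => /minj; lia.
  rewrite negb_forall => /existsP [m]; rewrite negb_imply => /andP [cm0].
  rewrite -ltNge => h; exists m; split => //.
  by move: h; have -> : (j0.-1)%:Z = j0%:Z - 1 by lia.
exists (j0%:Z - L); apply: fin.
  by move=> m cm0; have := forallP Pj0 m; rewrite cm0.
move=> q cq; have := F2 _ _ cp' cq; nia.
Qed.

Lemma sum_ind (R : pzRingType) n (m : 'I_n) (x : 'I_n -> R) :
  \sum_(k < n) (k == m)%:R * x k = x m.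
Proof.
rewrite (bigD1 m) //= eqxx mul1r big1 ?addr0 // => k /negbTE ->; by rewrite mul0r.
Qed.

Lemma orth_of (R : realType) n (E : ('I_n -> R) -> Prop) (c : 'I_n -> int) (xi : 'I_n -> R) :
  parallel E c -> \sum_(k < n) xi k * (c k)%:~R = 0 -> orth_to E xi.
Proof.
move=> par h a b Ea Eb; have [t ht] := par a b Ea Eb.
rewrite /dotR; transitivity (- t * \sum_(k < n) xi k * (c k)%:~R); last by rewrite h mulr0.
rewrite mulr_sumr; apply: eq_bigr => k _.
have -> : a k - b k = - (b k - a k) by rewrite opprB.
rewrite ht; ring.
Qed.

Lemma M_beta (R : realType) n (E : ('I_n -> R) -> Prop) (c : 'I_n -> int)
    (xis : 'I_n.-1 -> 'I_n -> nat) (i : 'I_n.-1 -> nat) :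
  parallel E c -> inM E xis i -> (forall j, \sum_(k < n) (xis j k)%:Z * c k = 0) ->
  exists beta : 'X_{1..n}, forall j, omega xis beta j = (i j + omega xis (cm c) j)%N.
Proof.
move=> par [alpha [ha hpos]] hc.
have F1 m : c m = 0 -> 0 <= alpha m.
  move=> cm0; have := hpos (fun k => (k == m)%:R) (fun k => ler0n _ _).
  rewrite sum_ind ler0z; apply; apply: orth_of par _.
  by rewrite sum_ind cm0.
have F2 p q : 0 < c p -> c q < 0 -> 0 <= - c q * alpha p + c p * alpha q.
  move=> cp cq.
  have := hpos (fun k => (- c q)%:~R * (k == p)%:R + (c p)%:~R * (k == q)%:R).
  have sE (y : 'I_n -> R) : \sum_(k < n) ((- c q)%:~R * (k == p)%:R + (c p)%:~R * (k == q)%:R) * y k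
      = (- c q)%:~R * y p + (c p)%:~R * y q.
    rewrite -(sum_ind q y) -(sum_ind p y) !mulr_sumr -big_split; apply: eq_bigr => k _ /=; ring.
  rewrite sE -!rmorphM -rmorphD /= ler0z; apply.
    move=> k; apply: addr_ge0; apply: mulr_ge0 => //; rewrite ?ler0z ?oppr_ge0 ?ltW //.
  apply: orth_of par _; rewrite sE -!rmorphM -rmorphD /=.
  by rewrite mulNr mulrC addNr.
have [k0 hk0] := choose_k0 F1 F2.
exists [multinom absz ((alpha k + (cm c k)%:Z + k0 * c k)%R) | k < n] => j.
apply/eqP; rewrite -eqz_nat PoszD /omega !Posz_sum.
rewrite (eq_bigr (fun k => (xis j k)%:Z * (alpha k + (cm c k)%:Z + k0 * c k))); last first.
  by move=> k _; rewrite PoszM mnmE gez0_abs.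
rewrite [X in _ == _ + X](eq_bigr (fun k => (xis j k)%:Z * (cm c k)%:Z)); last first.
  by move=> k _; rewrite PoszM.
under eq_bigr do rewrite !mulrDr.
rewrite !big_split /= ha; apply/eqP.
have -> : \sum_(k < n) (xis j k)%:Z * (k0 * c k) = k0 * \sum_(k < n) (xis j k)%:Z * c k.
  by rewrite mulr_sumr; apply: eq_bigr => k _; ring.
by rewrite hc mulr0 addr0.
Qed.


Section Rw.
Variables (K : fieldType) (n : nat) (xis : 'I_n.-1 -> 'I_n -> nat).
Implicit Types (p q : {mpoly K[n]}) (y : 'I_n.-1 -> nat).

Lemma in_Rw0 y : in_Rw xis y (0 : {mpoly K[n]}).
Proof. by move=> m; rewrite mcoeff_msupp raddf0 eqxx. Qed.

Lemma in_Rw_add y p q : in_Rw xis y p -> in_Rw xis y q -> in_Rw xis y (p + q).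
Proof. by move=> hp hq m /msuppD_le; rewrite mem_cat => /orP[/hp|/hq]. Qed.

Lemma in_Rw_scale y a p : in_Rw xis y p -> in_Rw xis y (a *: p).
Proof. by move=> hp m /msuppZ_le /hp. Qed.

Lemma in_Rw_ext y1 y2 p : (forall j, y1 j = y2 j) -> in_Rw xis y1 p -> in_Rw xis y2 p.
Proof. by move=> e hp m /hp h j; rewrite h e. Qed.

Lemma in_Rw_mul y y1 y2 p q : (forall j, y j = (y1 j + y2 j)%N) ->
  in_Rw xis y1 p -> in_Rw xis y2 q -> in_Rw xis y (p * q).
Proof.
move=> e hp hq m /msuppM_le /allpairsP [[m1 m2] /= [h1 h2 ->]] j.
by rewrite omD hp // hq // e.
Qed.

End Rw.

Lemma in_Rw_XPhi (K : fieldType) n (c : 'I_n -> int) (xis : 'I_n.-1 -> 'I_n -> nat) y r N (f : {poly K}) :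
  (exists k, c k != 0) -> (forall i, omega xis (cp c) i = omega xis (cm c) i) ->
  (forall j, (omega xis r j + omega xis (cm c) j * N)%N = y j) ->
  in_Rw xis y ('X_[r] * Phi c N f).
Proof.
move=> cnz omc e m /msupp_XPhi [j jN ->] i.
by rewrite om_Mon.
Qed.


Unset Implicit Arguments.

Theorem lemma2p5 (R : realType) (K : fieldType) (n : nat)
    (S : seq {ffun 'I_n -> nat}) (E : ('I_n -> R) -> Prop)
    (c : 'I_n -> int) (xis : 'I_n.-1 -> 'I_n -> nat)
    (w z : 'I_n.-1 -> nat) (G H : {mpoly K[n]}) :
  S != [::] ->
  loose_edge (newton_polyhedron (R:=R) S) E ->
  primitive c -> parallel E c ->
  lin_indep R xis ->
  (forall i, \sum_(k < n) (xis i k)%:Z * c k = 0) ->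
  in_Rw xis w G -> in_Rw xis z H ->
  mcoprime G H -> no_monomial_factor G ->
  forall i : 'I_n.-1 -> nat, inM E xis i ->
  forall p : {mpoly K[n]},
    in_Rw xis (fun j => (w j + z j + i j)%N) p <->
    exists a b : {mpoly K[n]},
      [/\ in_Rw xis (fun j => (z j + i j)%N) a,
          in_Rw xis (fun j => (w j + i j)%N) b & p = G * a + H * b].
Proof.
move=> Sne le pc par li hc hG hH cop nmf i hi p.
have cnz := cnz_of_prim pc.
have ker := @ker_line R n xis c li pc hc.
have omc : forall j, omega xis (cp c) j = omega xis (cm c) j.
  move=> j; apply/eqP; rewrite -eqz_nat /omega !Posz_sum -subr_eq0 -sumrB.
  by apply/eqP; rewrite -[RHS](hc j); apply: eq_bigr => k _; rewrite !PoszM -mulrBr cpmE.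
split.
2: { case=> a [b [ha hb ->]]; apply: in_Rw_add.
    by apply: (in_Rw_mul _ hG ha) => j; rewrite addnA.
  apply: (in_Rw_mul _ hH hb) => j; lia. }
move=> hp.
have Gnz : G != 0.
  apply/negP => /eqP G0; case: cnz => k0 _; apply: (nmf U_(k0)%MM).
    by rewrite mdeg1.
  by exists 0; rewrite G0 mulr0.
have [r [d [g [sg g0 eG ow]]]] := mstructure ker cnz omc hG Gnz.
have r0 : r = 0%MM.
  case: (eqVneq r 0%MM) => // rnz; exfalso; apply: (nmf r).
    by rewrite lt0n mdeg_eq0.
  by exists (Phi c d g).
rewrite r0 mpolyX0 mul1r in eG.
have hw j : w j = (omega xis (cm c) j * d)%N by rewrite -ow r0 om0.
case: (posnP d) => [d0|dpos].
  have eG0 : G = g`_0 *: 1.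
    rewrite eG d0 /Phi big_ord1 -mpolyX0.
    congr (_ *: 'X_[_]); apply/mnmP => k; by rewrite mnmDE !mulmnE /= !muln0.
  have gnz : g`_0 != 0 by [].
  exists ((g`_0)^-1 *: p), 0; split.
  - apply: in_Rw_scale; apply: in_Rw_ext hp => j; rewrite hw d0 muln0 //.
  - exact: in_Rw0.
  - by rewrite mulr0 addr0 eG0 -scalerAl mul1r scalerA mulfV // scale1r.
have Hnz : H != 0.
  apply/eqP => H0.
  have cop' : mcoprime (Phi c d g) ('X_[0%MM] * Phi c 0 0).
    by rewrite Phi0 mulr0 -eG -H0.
  have s0 : (size (0 : {poly K})%R <= 0.+1)%N by rewrite size_poly0.
  have := coprime_transfer cnz sg g0 s0 cop'.
  rewrite coprimep0 => /eqp_size; rewrite sg size_poly1; lia.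
have [eta [e [h [sh h0 eH oh]]]] := mstructure ker cnz omc hH Hnz.
have cgh : coprimep g h.
  by apply: (coprime_transfer cnz (eta:=eta) sg g0 (eq_leq sh)); rewrite -eG -eH.
have [beta hbeta] := M_beta par hi hc.
pose Dec (q : {mpoly K[n]}) := exists a b, [/\ in_Rw xis (fun j => (z j + i j)%N) a,
   in_Rw xis (fun j => (w j + i j)%N) b & q = G * a + H * b].
suff HD : forall m, (forall j, omega xis m j = (w j + z j + i j)%N) -> Dec 'X_[m].
  rewrite (mpolyE p) big_seq; apply: (big_ind Dec).
  - by exists 0, 0; split; try exact: in_Rw0; rewrite !mulr0 addr0.
  - move=> q1 q2 [a1 [b1 [ha1 hb1 ->]]] [a2 [b2 [ha2 hb2 ->]]].
    exists (a1 + a2), (b1 + b2); split; try exact: in_Rw_add.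
    by rewrite !mulrDr addrACA.
  - move=> m mi; have [a [b [ha hb ->]]] := HD m (hp m mi).
    exists (p@_m *: a), (p@_m *: b); split; try exact: in_Rw_scale.
    by rewrite scalerDr -!scalerAr.
move=> m hm.
set D0 := (d.-1 + e)%N.
have hp0 : forall j, omega xis (eta + beta + cm c *+ D0)%MM j = omega xis m j.
  move=> j; rewrite !omD omMn hbeta hm hw -oh /D0.
  have -> : d = d.-1.+1 by rewrite prednK.
  rewrite /=; nia.
have [t ht] := ker _ _ hp0.
have [r' [N [Kx [s [KN sN em eeb]]]]] := choose_frame ht.
have [A [B [sB eX hA]]] := alg_core dpos sg g0 (eq_leq sh) cgh KN sN.
have := lift_decomp dpos sg (eq_leq sh) sB KN sN eX hA eeb.
rewrite -em -eG -eH => eXm.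
exists ('X_[r'] * Phi c (N - d) A), ('X_[beta] * Phi c d.-1 B); split => //.
  case: hA => [->|[dN _]]; first by rewrite Phi0 mulr0; exact: in_Rw0.
  apply: in_Rw_XPhi => // j.
  have := hm j; rewrite em om_Mon // hw => e1.
  rewrite mulnBr; move: e1; set x := omega xis (cm c) j.
  have : (x * d <= x * N)%N by rewrite leq_mul2l dN orbT.
  lia.
apply: in_Rw_XPhi => // j; rewrite hbeta hw.
have -> : d = d.-1.+1 by rewrite prednK.
rewrite /=; nia.
Qed.
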